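(* For any nontrivial connected graph $G$, $\gamma_{oiR}(G)<\gamma_{oidR}(G)<2\gamma_{oiR}(G)$.
   Context: A graph is nontrivial if it has at least two vertices. A DRD function of $G$ is $f:V(G)\to\{0,1,2,3\}$ such that every vertex with value $0$ has a neighbor with value $3$ or two neighbors with value $2$, and every vertex with value $1$ has a neighbor with value at least $2$; it is an OIDRD function if the set of vertices with value $0$ is independent, and $\gamma_{oidR}(G)$ is the minimum weight $\sum_v f(v)$ of an OIDRD function. A Roman dominating function is $f:V(G)\to\{0,1,2\}$ such that every vertex with value $0$ has a neighbor with value $2$; it is an OIRD function if the set of vertices with value $0$ is independent, and $\gamma_{oiR}(G)$ is the minimum weight of an OIRD function. *)

(* Defs.v *)
From mathcomp Require Import all_boot.
Set Implicit Arguments. Unset Strict Implicit. Unset Printing Implicit Defensive.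

Definition simple_graph (T : finType) (e : rel T) : Prop :=
  symmetric e /\ irreflexive e.

Definition nontrivial (T : finType) : Prop := 2 <= #|T|.

Definition connected_graph (T : finType) (e : rel T) : Prop :=
  forall x y : T, connect e x y.

Definition is_DRD (T : finType) (e : rel T) (f : {ffun T -> 'I_4}) : bool :=
  [forall v,
     ((f v : nat) == 0) ==>
       ([exists u, e v u && ((f u : nat) == 3)] ||
        [exists u, exists w, [&& u != w, e v u, e v w,
                                 (f u : nat) == 2 & (f w : nat) == 2]])]
  && [forall v, ((f v : nat) == 1) ==> [exists u, e v u && (2 <= f u)]].

Definition zeros_independent (T : finType) (e : rel T) (n : nat)
    (f : {ffun T -> 'I_n}) : bool :=
  [forall u, forall v, (((f u : nat) == 0) && ((f v : nat) == 0)) ==> ~~ e u v].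

Definition is_OIDRD (T : finType) (e : rel T) (f : {ffun T -> 'I_4}) : bool :=
  is_DRD e f && zeros_independent e f.

Definition is_RD (T : finType) (e : rel T) (f : {ffun T -> 'I_3}) : bool :=
  [forall v, ((f v : nat) == 0) ==> [exists u, e v u && ((f u : nat) == 2)]].

Definition is_OIRD (T : finType) (e : rel T) (f : {ffun T -> 'I_3}) : bool :=
  is_RD e f && zeros_independent e f.

Definition weight (T : finType) (n : nat) (f : {ffun T -> 'I_n}) : nat :=
  \sum_(v : T) (f v : nat).

(* The neutral element of minn is larger than the weight of
   the constant-3 (resp. constant-2) function, which is always an OIDRD
   (resp. OIRD) function, so these are genuine minima. *)
Definition gamma_oidR (T : finType) (e : rel T) : nat :=
  \big[minn/(4 * #|T|)]_(f : {ffun T -> 'I_4} | is_OIDRD e f) weight f.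

Definition gamma_oiR (T : finType) (e : rel T) : nat :=
  \big[minn/(3 * #|T|)]_(f : {ffun T -> 'I_3} | is_OIRD e f) weight f.

(* Main.v *)
Require Import Defs.
From mathcomp Require Import all_boot.
From mathcomp Require Import zify.

Lemma bigmin_spec (I : finType) (P : pred I) (F : I -> nat) d i0 :
  P i0 -> F i0 <= d ->
  (exists i, P i /\ \big[minn/d]_(i | P i) F i = F i) /\
  (forall i, P i -> \big[minn/d]_(i | P i) F i <= F i).
Proof.
move=> Pi0 Hd.
have H2 : forall i, P i -> \big[minn/d]_(i | P i) F i <= F i.
  move=> i Pi; have : i \in index_enum I by rewrite mem_index_enum.
  elim: (index_enum I) => [//|a s IH]; rewrite inE big_cons.
  case/orP=> [/eqP <-|/IH Hs]; first by rewrite Pi geq_minl.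
  by case: (P a) => //; rewrite geq_min Hs orbT.
split=> //.
case: (arg_minnP F Pi0) => j Pj Hj.
exists j; split=> //; apply/eqP; rewrite eqn_leq H2 //=.
apply: (big_ind (fun x => F j <= x)).
- exact: leq_trans (Hj _ Pi0) Hd.
- by move=> x y Hx Hy; rewrite leq_min Hx.
- exact: Hj.
Qed.

Lemma sum_lt (T : finType) (a b : T -> nat) u :
  (forall v, a v <= b v) -> a u < b u -> \sum_v a v < \sum_v b v.
Proof.
move=> H Hu; rewrite (bigD1 u) //= [X in _ < X](bigD1 u) //=.
rewrite -addSn; apply: leq_add => //; exact: leq_sum.
Qed.

Lemma oidR_spec (T : finType) (e : rel T) :
  (exists f, is_OIDRD e f /\ gamma_oidR e = weight f) /\
  (forall f, is_OIDRD e f -> gamma_oidR e <= weight f).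
Proof.
pose f0 : {ffun T -> 'I_4} := [ffun => inord 3].
have Hf0 : is_OIDRD e f0.
  apply/andP; split; [apply/andP; split|].
  - by apply/forallP => v; rewrite ffunE inordK.
  - by apply/forallP => v; rewrite ffunE inordK.
  - by apply/forallP => u; apply/forallP => v; rewrite !ffunE !inordK.
have Hw : weight f0 <= 4 * #|T|.
  rewrite /weight (eq_bigr (fun=> 3)); last by move=> v _; rewrite ffunE inordK.
  by rewrite sum_nat_const cardE mulnC leq_mul2r leqnSn orbT.
have [[f [Pf Ef]] H] := @bigmin_spec _ _ (fun f => weight f) _ _ Hf0 Hw.
by split; [exists f|].
Qed.

Lemma oiR_spec (T : finType) (e : rel T) :
  (exists f, is_OIRD e f /\ gamma_oiR e = weight f) /\
  (forall f, is_OIRD e f -> gamma_oiR e <= weight f).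
Proof.
pose f0 : {ffun T -> 'I_3} := [ffun => inord 2].
have Hf0 : is_OIRD e f0.
  apply/andP; split.
  - by apply/forallP => v; rewrite ffunE inordK.
  - by apply/forallP => u; apply/forallP => v; rewrite !ffunE !inordK.
have Hw : weight f0 <= 3 * #|T|.
  rewrite /weight (eq_bigr (fun=> 2)); last by move=> v _; rewrite ffunE inordK.
  by rewrite sum_nat_const cardE mulnC leq_mul2r leqnSn orbT.
have [[f [Pf Ef]] H] := @bigmin_spec _ _ (fun f => weight f) _ _ Hf0 Hw.
by split; [exists f|].
Qed.

Lemma part1 (T : finType) (e : rel T) (x : T) (f : {ffun T -> 'I_4}) :
  is_OIDRD e f -> exists g, is_OIRD e g /\ weight g < weight f.
Proof.
move/andP=> [/andP [/forallP H0 /forallP H1] Hz].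
have Hz' : forall a b, ((f a : nat) == 0) -> ((f b : nat) == 0) -> ~~ e a b.
  by move=> a b Ha Hb; move/forallP: Hz => /(_ a) /forallP /(_ b); rewrite Ha Hb.
case: (boolP [exists u, (f u : nat) == 3]).
- move/existsP=> [u Hu].
  pose g : {ffun T -> 'I_3} := [ffun v => inord (minn (f v) 2)].
  have gE : forall v, (g v : nat) = minn (f v) 2.
    by move=> v; rewrite ffunE inordK //; lia.
  have gz : forall v, ((g v : nat) == 0) = ((f v : nat) == 0).
    by move=> v; rewrite gE; case: (f v) => [[|[|n]] ?].
  exists g; split.
  + apply/andP; split.
    * apply/forallP => v; apply/implyP; rewrite gz => Hv.
      case/orP: (implyP (H0 v) Hv) => [/existsP [w /andP [evw fw]]
        | /existsP [w1 /existsP [w2 /and5P [_ e1 _ f1 _]]]];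
        apply/existsP; [exists w | exists w1]; rewrite ?evw ?e1 gE.
      - by rewrite (eqP fw).
      - by rewrite (eqP f1).
    * apply/forallP => a; apply/forallP => b; apply/implyP; rewrite !gz.
      by move/andP=> [Ha Hb]; apply: Hz'.
  + rewrite /weight; apply: (@sum_lt _ (fun v => (g v : nat)) (fun v => (f v : nat)) u).
    * by move=> v; rewrite gE geq_minl.
    * by rewrite gE (eqP Hu).
- rewrite negb_exists => /forallP Hn.
  have [u Hu] : exists u, (f u : nat) = 2.
    have := ltn_ord (f x); have := Hn x.
    case Ex: (nat_of_ord (f x)) => [|[|[|[|n]]]] //= _ _.
    + have := implyP (H0 x); rewrite Ex => /(_ isT).
      case/orP=> [/existsP [w /andP [_ fw]] | /existsP [w1 /existsP [w2 /and5P [_ _ _ f1 _]]]].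
      * by move: (Hn w); rewrite fw.
      * by exists w1; apply/eqP.
    + have := implyP (H1 x); rewrite Ex => /(_ isT) /existsP [w /andP [_ fw]].
      exists w; have := Hn w; have := ltn_ord (f w); move: fw; lia.
    + by exists x.
  pose g : {ffun T -> 'I_3} := [ffun v => inord (if v == u then 1 else f v)].
  have gE : forall v, (g v : nat) = if v == u then 1 else f v.
    move=> v; rewrite ffunE inordK //; case: eqP => // _.
    have := Hn v; have := ltn_ord (f v); lia.
  have gz : forall v, ((g v : nat) == 0) = ((f v : nat) == 0).
    by move=> v; rewrite gE; case: (eqVneq v u) => [->|N]; rewrite ?eqxx ?Hu ?(negbTE N).
  exists g; split.
  + apply/andP; split.
    * apply/forallP => v; apply/implyP; rewrite gz => Hv.
      case/orP: (implyP (H0 v) Hv) => [/existsP [w /andP [evw fw]]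
        | /existsP [w1 /existsP [w2 /and5P [n12 e1 e2 f1 f2]]]].
      - by move: (Hn w); rewrite fw.
      - apply/existsP; case: (eqVneq w1 u) => [E1|N1].
        + exists w2; rewrite e2 gE.
          have -> : (w2 == u) = false by apply/negbTE; rewrite -E1 eq_sym.
          by [].
        + by exists w1; rewrite e1 gE (negbTE N1).
    * apply/forallP => a; apply/forallP => b; apply/implyP; rewrite !gz.
      by move/andP=> [Ha Hb]; apply: Hz'.
  + rewrite /weight; apply: (@sum_lt _ (fun v => (g v : nat)) (fun v => (f v : nat)) u).
    * by move=> v; rewrite gE; case: (eqVneq v u) => [->|N]; rewrite ?eqxx ?Hu ?(negbTE N).
    * by rewrite gE eqxx Hu.
Qed.

Lemma part2 (T : finType) (e : rel T) (x : T) (g : {ffun T -> 'I_3}) :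
  irreflexive e -> (exists w, e x w) ->
  is_OIRD e g -> exists f, is_OIDRD e f /\ weight f < 2 * weight g.
Proof.
move=> irr [w0 exw0] /andP [/forallP H0 Hz].
have Hz' : forall a b, ((g a : nat) == 0) -> ((g b : nat) == 0) -> ~~ e a b.
  by move=> a b Ha Hb; move/forallP: Hz => /(_ a) /forallP /(_ b); rewrite Ha Hb.
rewrite /weight big_distrr /=.
case: (boolP [exists u, (g u : nat) == 2]).
- move/existsP=> [u Hu].
  pose f : {ffun T -> 'I_4} :=
    [ffun v => inord (if (g v : nat) == 2 then 3 else 2 * g v)].
  have fE : forall v, (f v : nat) = if (g v : nat) == 2 then 3 else 2 * g v.
    by move=> v; rewrite ffunE inordK //; case: (g v) => [[|[|[|n]]] ?].
  have fz : forall v, ((f v : nat) == 0) = ((g v : nat) == 0).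
    by move=> v; rewrite fE; case: (g v) => [[|[|[|n]]] ?].
  have f1 : forall v, ((f v : nat) == 1) = false.
    by move=> v; rewrite fE; case: (g v) => [[|[|[|n]]] ?].
  exists f; split.
  + apply/andP; split; [apply/andP; split|].
    * apply/forallP => v; apply/implyP; rewrite fz => Hv.
      case/existsP: (implyP (H0 v) Hv) => w /andP [evw gw].
      by apply/orP; left; apply/existsP; exists w; rewrite evw fE gw.
    * by apply/forallP => v; rewrite f1.
    * apply/forallP => a; apply/forallP => b; apply/implyP; rewrite !fz.
      by move/andP=> [Ha Hb]; apply: Hz'.
  + apply: (@sum_lt _ (fun v => (f v : nat)) (fun v => 2 * (g v : nat)) u).
    * by move=> v; rewrite fE; case: (g v) => [[|[|[|n]]] ?].
    * by rewrite fE Hu (eqP Hu).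
- rewrite negb_exists => /forallP Hn.
  have Hpos : forall v, (g v : nat) != 0.
    move=> v; apply/negP => Hv.
    case/existsP: (implyP (H0 v) Hv) => w /andP [_ gw].
    by move: (Hn w); rewrite gw.
  pose f : {ffun T -> 'I_4} := [ffun v => inord (if v == x then 1 else 2)].
  have fE : forall v, (f v : nat) = if v == x then 1 else 2.
    by move=> v; rewrite ffunE inordK //; case: (v == x).
  exists f; split.
  + apply/andP; split; [apply/andP; split|].
    * by apply/forallP => v; rewrite fE; case: (v == x).
    * apply/forallP => v; rewrite fE; case: (eqVneq v x) => [->|N]; rewrite ?eqxx ?(negbTE N) //=.
      apply/existsP; exists w0; rewrite exw0 fE.
      have -> : (w0 == x) = false.
        by apply/negbTE; apply/negP => /eqP E; move: exw0; rewrite E irr.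
      by [].
    * apply/forallP => a; apply/forallP => b; rewrite !fE.
      by case: (a == x); case: (b == x).
  + apply: (@sum_lt _ (fun v => (f v : nat)) (fun v => 2 * (g v : nat)) x).
    * move=> v; rewrite fE; have := Hpos v.
      move: (nat_of_ord (g v)) => n; case: (v == x); lia.
    * rewrite fE eqxx; have := Hpos x; move: (nat_of_ord (g x)) => n; lia.
Qed.

Lemma neighbor (T : finType) (e : rel T) (x y : T) :
  connect e x y -> x != y -> exists w, e x w.
Proof.
case/connectP => [[|w p]] /= Hp Hl; first by rewrite Hl eqxx.
by move=> _; exists w; case/andP: Hp.
Qed.

Theorem corollary2 (T : finType) (e : rel T) :
  simple_graph e -> nontrivial T -> connected_graph e ->
  gamma_oiR e < gamma_oidR e < 2 * gamma_oiR e.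
Proof.
move=> [_ irr] Hnt Hc.
have [x [y [_ _ nxy]]] : exists x y : T, [/\ x \in T, y \in T & x != y].
  by apply/card_gt1P.
have [w exw] := @neighbor _ _ _ _ (Hc x y) nxy.
have [[f [Pf Ef]] Hf] := @oidR_spec _ e.
have [[g [Pg Eg]] Hg] := @oiR_spec _ e.
apply/andP; split.
- have [g' [Pg' Lg']] := @part1 _ _ x _ Pf.
  by rewrite Ef; apply: leq_ltn_trans (Hg _ Pg') Lg'.
- have [f' [Pf' Lf']] := @part2 _ _ x _ irr (ex_intro _ w exw) Pg.
  by rewrite Eg; apply: leq_ltn_trans (Hf _ Pf') Lf'.
Qed.
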